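(* Let $m\ge 2$ and let $C_1,\dots,C_m\subset\mathbb{R}^n$ be nonempty, closed, convex, pairwise disjoint sets, and assume either all $C_i$ are bounded, or for every $j$ with $C_j$ unbounded and every sequence $(a^{(k)})\subset C_j$ with $\|a^{(k)}\|\to\infty$, at least one of $d_{C_{j-1}}(a^{(k)})\to\infty$, $d_{C_{j+1}}(a^{(k)})\to\infty$ holds (cyclic indices). Let $D(a)=\sum_{i=1}^m\|a_i-a_{i+1}\|$ ($a_{m+1}=a_1$). Let $a_i^{(0)}\in C_i$ and let $(\alpha_k)$ be positive step sizes with $\sum_k\alpha_k=\infty$ and $\sum_k\alpha_k^2<\infty$. Define iteratively, for $i=1,\dots,m$, $$g_i^{(k)}=\frac{a_i^{(k)}-a_{i-1}^{(k)}}{\|a_i^{(k)}-a_{i-1}^{(k)}\|}+\frac{a_i^{(k)}-a_{i+1}^{(k)}}{\|a_i^{(k)}-a_{i+1}^{(k)}\|},\qquad a_i^{(k+1)}=\operatorname{proj}_{C_i}\big(a_i^{(k)}-\alpha_k g_i^{(k)}\big),$$ with cyclic indices $a_0^{(k)}=a_m^{(k)}$, $a_{m+1}^{(k)}=a_1^{(k)}$. Then the sequence $(a_1^{(k)},\dots,a_m^{(k)})$ converges to an optimal solution $(a_1^*,\dots,a_m^* )$ of $\min_{a\in C_1\times\cdots\times C_m}D(a)$, and $D(a_1^{(k)},\dots,a_m^{(k)})$ converges to the optimal value $D^*=\min_{a\in C}D(a)$.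
   Context: $\operatorname{proj}_K(x)$ denotes the (unique) Euclidean projection of $x$ onto a nonempty closed convex set $K$, i.e. the point of $K$ nearest to $x$. $d_K(x)=\inf_{y\in K}\|x-y\|$. The vector $g_i^{(k)}$ is well defined because consecutive iterates lie in disjoint sets. *)

(* Defs.v *)
(* Points of R^n are row vectors 'rV[R]_n
   over an arbitrary R : realType; the Euclidean norm is defined explicitly
   (the library's norm on 'rV is the max norm, which induces the same
   topology, so the library's `closed` and `-->` are the Euclidean notions). *)
From HB Require Import structures.
From mathcomp Require Import all_boot all_order all_algebra.
From mathcomp Require Import all_classical all_reals all_analysis.
Set Implicit Arguments. Unset Strict Implicit. Unset Printing Implicit Defensive.
Import Order.TTheory GRing.Theory Num.Theory.
Import numFieldNormedType.Exports.
Local Open Scope classical_set_scope.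
Local Open Scope ring_scope.

Definition enorm (R : realType) (n : nat) (v : 'rV[R]_n) : R :=
  Num.sqrt (\sum_(j < n) v ord0 j ^+ 2).

Definition ebounded (R : realType) (n : nat) (K : set 'rV[R]_n) : Prop :=
  exists M : R, forall x, K x -> enorm x <= M.

Definition dist_set (R : realType) (n : nat) (K : set 'rV[R]_n) (x : 'rV[R]_n) : R :=
  inf [set enorm (x - y) | y in K].

Definition is_proj (R : realType) (n : nat) (K : set 'rV[R]_n) (x p : 'rV[R]_n)
  : Prop := K p /\ forall y, K y -> enorm (x - p) <= enorm (x - y).

Definition Dobj (R : realType) (n m : nat) (a : 'I_m -> 'rV[R]_n) : R :=
  \sum_(i < m) enorm (a i - a (ordS i)).

Definition gdir (R : realType) (n m : nat) (a : 'I_m -> 'rV[R]_n) (i : 'I_m)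
  : 'rV[R]_n :=
  (enorm (a i - a (ord_pred i)))^-1 *: (a i - a (ord_pred i)) +
  (enorm (a i - a (ordS i)))^-1 *: (a i - a (ordS i)).

(* Main.v *)
Require Import Defs.
From HB Require Import structures.
From mathcomp Require Import all_boot all_order all_algebra.
From mathcomp Require Import all_classical all_reals all_analysis.
Set Implicit Arguments. Unset Strict Implicit. Unset Printing Implicit Defensive.
Import Order.TTheory GRing.Theory Num.Theory.
Import numFieldNormedType.Exports.
Local Open Scope classical_set_scope.
Local Open Scope ring_scope.
From mathcomp Require Import ring lra zify.
Local Open Scope convex_scope.

Section vec.
Context (R : realType) (n : nat).
Implicit Types u v w : 'rV[R]_n.

Definition dot u v : R := \sum_(j < n) u ord0 j * v ord0 j.

Lemma dotC u v : dot u v = dot v u.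
Proof. by apply: eq_bigr => j _; rewrite mulrC. Qed.

Lemma dotDl u v w : dot (u + v) w = dot u w + dot v w.
Proof. by rewrite /dot -big_split; apply: eq_bigr => j _; rewrite !mxE mulrDl. Qed.

Lemma dotNl u v : dot (- u) v = - dot u v.
Proof. by rewrite /dot -sumrN; apply: eq_bigr => j _; rewrite !mxE mulNr. Qed.

Lemma dotZl (c : R) u v : dot (c *: u) v = c * dot u v.
Proof. by rewrite /dot mulr_sumr; apply: eq_bigr => j _; rewrite !mxE mulrA. Qed.

Lemma dotBl u v w : dot (u - v) w = dot u w - dot v w.
Proof. by rewrite dotDl dotNl. Qed.

Lemma dotDr u v w : dot w (u + v) = dot w u + dot w v.
Proof. by rewrite dotC dotDl !(dotC w). Qed.
Lemma dotBr u v w : dot w (u - v) = dot w u - dot w v.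
Proof. by rewrite dotC dotBl !(dotC w). Qed.
Lemma dotZr (c : R) u v : dot v (c *: u) = c * dot v u.
Proof. by rewrite dotC dotZl dotC. Qed.

Lemma dot_ge0 u : 0 <= dot u u.
Proof. by apply: sumr_ge0 => j _; rewrite -expr2 sqr_ge0. Qed.

Lemma enormE u : enorm u = Num.sqrt (dot u u).
Proof. by rewrite /enorm /dot; congr Num.sqrt; apply: eq_bigr => j _; rewrite expr2. Qed.

Lemma enorm_ge0 u : 0 <= enorm u.
Proof. exact: sqrtr_ge0. Qed.

Lemma enorm_sq u : enorm u ^+ 2 = dot u u.
Proof. by rewrite enormE sqr_sqrtr // dot_ge0. Qed.

Lemma dot0_eq0 u : dot u u = 0 -> u = 0.
Proof.
move=> /eqP; rewrite psumr_eq0; last by move=> j _; rewrite -expr2 sqr_ge0.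
move=> /allP H; apply/rowP => j; rewrite mxE.
by have := H j (mem_index_enum j); rewrite /= mulf_eq0 orbb => /eqP.
Qed.

Lemma dot0l v : dot 0 v = 0.
Proof. by rewrite /dot big1 // => j _; rewrite mxE mul0r. Qed.

Lemma enormN u : enorm (- u) = enorm u.
Proof. by rewrite !enormE dotNl dotC dotNl opprK. Qed.

Lemma enormB u v : enorm (u - v) = enorm (v - u).
Proof. by rewrite -enormN opprB. Qed.

Lemma CS u v : dot u v <= enorm u * enorm v.
Proof.
have [u0|u0] := eqVneq (dot u u) 0.
  by rewrite (dot0_eq0 u0) dot0l mulr_ge0 // enorm_ge0.
have [v0|v0] := eqVneq (dot v v) 0.
  by rewrite (dot0_eq0 v0) dotC dot0l mulr_ge0 // enorm_ge0.
set s := enorm u; set t := enorm v.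
have s0 : 0 < s by rewrite /s enormE sqrtr_gt0 lt_neqAle eq_sym u0 dot_ge0.
have t0 : 0 < t by rewrite /t enormE sqrtr_gt0 lt_neqAle eq_sym v0 dot_ge0.
have H := dot_ge0 (t *: u - s *: v).
rewrite !(dotBl, dotBr, dotZl, dotZr) -!enorm_sq -/s -/t (dotC v u) in H.
have : 2 * (s * t) * dot u v <= 2 * (s * t) * (s * t) by nra.
by rewrite ler_pM2l // mulr_gt0 // mulr_gt0.
Qed.

Lemma enorm_triangle u v : enorm (u + v) <= enorm u + enorm v.
Proof.
rewrite -(ler_pXn2r (_ : (0 < 2)%N)) ?nnegrE ?addr_ge0 ?enorm_ge0 //.
rewrite enorm_sq dotDl !dotDr (dotC v u) -!enorm_sq.
have := CS u v; nra.
Qed.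

Lemma coord_le u j : `|u ord0 j| <= enorm u.
Proof.
rewrite -(ler_pXn2r (_ : (0 < 2)%N)) ?nnegrE ?enorm_ge0 //.
rewrite enorm_sq /dot (bigD1 j) //= real_normK ?num_real // -expr2 lerDl.
by apply: sumr_ge0 => i _; rewrite -expr2 sqr_ge0.
Qed.

Lemma enorm_le_sum u : enorm u <= \sum_j `|u ord0 j|.
Proof.
rewrite -(ler_pXn2r (_ : (0 < 2)%N)) ?nnegrE ?enorm_ge0 ?sumr_ge0 //.
rewrite enorm_sq /dot expr2 mulr_suml; apply: ler_sum => i _.
rewrite mulr_sumr (bigD1 i) //=.
have -> : u ord0 i * u ord0 i = `|u ord0 i| * `|u ord0 i|.
  by rewrite -normrM ger0_norm // -expr2 sqr_ge0.
rewrite lerDl.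
by apply: sumr_ge0 => k _; rewrite mulr_ge0 ?normr_ge0.
Qed.

Lemma dot_subZ u v (c : R) : dot (u - c *: v) (u - c *: v) = dot u u - 2 * c * dot v u + c ^+ 2 * dot v v.
Proof. rewrite dotBl !dotBr !dotZl !dotZr (dotC u v); ring. Qed.

Lemma sqr_le_enorm u v : dot u u <= dot v v -> enorm u <= enorm v.
Proof. by rewrite !enormE => H; rewrite ler_sqrt // dot_ge0. Qed.

Lemma enorm_le_sqr u v : enorm u <= enorm v -> dot u u <= dot v v.
Proof.
move=> H; rewrite -!enorm_sq.
by rewrite (ler_pXn2r (_ : (0 < 2)%N)) ?nnegrE ?enorm_ge0.
Qed.

Lemma proj_obtuse (K : set 'rV[R]_n) x p y : convex_set K -> is_proj K x p -> K y ->
  dot (x - p) (y - p) <= 0.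
Proof.
move=> cK [Kp Hp] Ky.
set d := dot (x - p) (y - p); set c := dot (y - p) (y - p).
have key t (t0 : 0 <= t) : 0 < t -> t <= 1 -> 2 * d <= t * c.
  move=> tp t1.
  have Kz : K ((y : convex_lmodType _) <| Itv01 t0 t1 |> p).
    by have := cK y p (Itv01 t0 t1) (mem_set Ky) (mem_set Kp); rewrite inE.
  have := enorm_le_sqr (Hp _ Kz).
  have -> : x - ((y : convex_lmodType _) <| Itv01 t0 t1 |> p) = (x - p) - t *: (y - p).
    rewrite /conv /= /unstable.onem scalerBl scale1r scalerBr.
    by rewrite !opprD !opprK !addrA (addrAC x (- (t *: y))).
  move=> h; have : 0 <= t * (t * c - 2 * d).
    move: h; rewrite /d /c !(dotBl, dotBr, dotZl, dotZr) ?(dotC p x) ?(dotC y x) ?(dotC y p); nra.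
  by rewrite pmulr_rge0 // subr_ge0.
rewrite leNgt; apply/negP => d0.
have c0 : 0 <= c by exact: dot_ge0.
have t0 : 0 <= d / (c + d + 1) by rewrite divr_ge0 //; lra.
have t1 : d / (c + d + 1) <= 1 by rewrite ler_pdivrMr ?mul1r; lra.
have := key _ t0 _ t1.
have -> : (0 < d / (c + d + 1)) = true by rewrite divr_gt0 //; lra.
move=> /(_ isT).
rewrite mulrAC ler_pdivlMr; last by lra.
nra.
Qed.

Lemma proj_nonexp (K : set 'rV[R]_n) x p y : convex_set K -> is_proj K x p -> K y ->
  dot (p - y) (p - y) <= dot (x - y) (x - y).
Proof.
move=> cK Hp Ky; have := proj_obtuse cK Hp Ky; have := dot_ge0 (x - p).
rewrite !(dotBl, dotBr) ?(dotC p x) ?(dotC y x) ?(dotC y p); lra.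
Qed.

Lemma enorm_gt0 v : v != 0 -> 0 < enorm v.
Proof.
move=> v0; rewrite enormE sqrtr_gt0 lt_neqAle dot_ge0 andbT.
by apply: contra v0 => /eqP H; apply/eqP/dot0_eq0.
Qed.

Lemma unit_self v : v != 0 -> dot ((enorm v)^-1 *: v) v = enorm v.
Proof.
move=> v0; have := enorm_gt0 v0 => e0.
by rewrite dotZl -enorm_sq expr2 mulrA mulVf ?mul1r // gt_eqF.
Qed.

Lemma unit_dot v : v != 0 -> dot ((enorm v)^-1 *: v) ((enorm v)^-1 *: v) = 1.
Proof.
move=> v0; have := enorm_gt0 v0 => e0.
by rewrite dotZr unit_self // mulVf // gt_eqF.
Qed.

Lemma unit_le v w : v != 0 -> dot ((enorm v)^-1 *: v) w <= enorm w.
Proof.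
move=> v0; apply: le_trans (CS _ _) _.
have -> : enorm ((enorm v)^-1 *: v) = 1 by rewrite enormE unit_dot // sqrtr1.
by rewrite mul1r.
Qed.
End vec.

Section tup.
Context (R : realType) (n m : nat).
Implicit Types x b : 'I_m -> 'rV[R]_n.

Lemma gdir_alt x i : x (ord_pred i) - x (ordS (ord_pred i)) != 0 ->
  gdir x i = (enorm (x i - x (ordS i)))^-1 *: (x i - x (ordS i)) -
    (enorm (x (ord_pred i) - x (ordS (ord_pred i))))^-1 *: (x (ord_pred i) - x (ordS (ord_pred i))).
Proof.
move=> _; rewrite /gdir ord_predK addrC; congr (_ + _).
by rewrite -scalerN opprB enormB.
Qed.

Lemma subgrad x b : (forall i, x i - x (ordS i) != 0) ->
  Dobj x - Dobj b <= \sum_i dot (gdir x i) (x i - b i).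
Proof.
move=> xne.
pose u i := (enorm (x i - x (ordS i)))^-1 *: (x i - x (ordS i)).
have -> : \sum_i dot (gdir x i) (x i - b i) =
    \sum_i dot (u i) ((x i - b i) - (x (ordS i) - b (ordS i))).
  rewrite (eq_bigr (fun i => dot (u i) (x i - b i) - dot (u (ord_pred i)) (x i - b i))); last first.
    by move=> i _; rewrite gdir_alt ?xne // dotBl /u.
  rewrite sumrB; under [in RHS]eq_bigr => i _ do rewrite dotBr.
  rewrite sumrB; congr (_ - _).
  rewrite (reindex_inj (@ordS_inj m)) /=.
  by apply: eq_bigr => i _; rewrite ordSK.
rewrite /Dobj -sumrB; apply: ler_sum => i _.
have -> : x i - b i - (x (ordS i) - b (ordS i)) = (x i - x (ordS i)) - (b i - b (ordS i)).
  by rewrite !opprD !opprK addrACA.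
rewrite dotBr unit_self ?xne //; apply: lerB => //.
exact: unit_le.
Qed.

Lemma gdir_sq x i : x i - x (ordS i) != 0 -> x i - x (ord_pred i) != 0 ->
  dot (gdir x i) (gdir x i) <= 4.
Proof.
move=> h1 h2; rewrite /gdir.
have ew : enorm ((enorm (x i - x (ordS i)))^-1 *: (x i - x (ordS i))) = 1.
  by rewrite enormE unit_dot // sqrtr1.
have := unit_le ((enorm (x i - x (ordS i)))^-1 *: (x i - x (ordS i))) h2.
rewrite ew !(dotDl, dotDr) !unit_dot // (dotC ((enorm (x i - x (ordS i)))^-1 *: _)).
lra.
Qed.
End tup.

Definition Sq (R : realType) (n m : nat) (x b : 'I_m -> 'rV[R]_n) : R :=
  \sum_i dot (x i - b i) (x i - b i).

Section iter.
Context (R : realType) (n m : nat) (C : 'I_m -> set 'rV[R]_n) (alpha : nat -> R)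
  (a : nat -> 'I_m -> 'rV[R]_n).
Hypothesis m2 : (2 <= m)%N.
Hypothesis Cdisj : forall i j, i != j -> C i `&` C j = set0.
Hypothesis Ccvx : forall i, convex_set (C i).
Hypothesis alpha_pos : forall k, 0 < alpha k.
Hypothesis a0 : forall i, C i (a 0%N i).
Hypothesis aproj : forall k i, is_proj (C i) (a k i - alpha k *: gdir (a k) i) (a k.+1 i).

Lemma ordS_neq (i : 'I_m) : ordS i != i.
Proof.
apply/eqP => /(congr1 val) /=; case: i => i /= im.
have [e|ne] := eqVneq i.+1 m; first by rewrite e modnn; lia.
by rewrite modn_small; lia.
Qed.

Lemma ord_pred_neq (i : 'I_m) : ord_pred i != i.
Proof.
apply/eqP => h; have := ordS_neq (ord_pred i); rewrite ord_predK h.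
by rewrite eqxx.
Qed.

Lemma disj_ne x y i j : i != j -> C i x -> C j y -> x - y != 0.
Proof.
move=> ij Cx Cy; rewrite subr_eq0; apply/eqP => xy; subst y.
by have : (C i `&` C j) x by []; rewrite Cdisj.
Qed.

Lemma aC k i : C i (a k i).
Proof. by case: k => [|k]; [exact: a0 | case: (@aproj k i)]. Qed.

Lemma step k b : (forall i, C i (b i)) ->
  Sq (a k.+1) b <= Sq (a k) b - 2 * alpha k * (Dobj (a k) - Dobj b) + 4 * m%:R * alpha k ^+ 2.
Proof.
move=> Cb.
have ne1 i : a k i - a k (ordS i) != 0 by apply: disj_ne (aC _ _) (aC _ _); rewrite eq_sym ordS_neq.
have ne2 i : a k i - a k (ord_pred i) != 0 by apply: disj_ne (aC _ _) (aC _ _); rewrite eq_sym ord_pred_neq.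
have H i : dot (a k.+1 i - b i) (a k.+1 i - b i) <=
    dot (a k i - b i) (a k i - b i) - 2 * alpha k * dot (gdir (a k) i) (a k i - b i)
    + alpha k ^+ 2 * 4.
  apply: le_trans (proj_nonexp (@Ccvx i) (@aproj k i) (Cb i)) _.
  have -> : a k i - alpha k *: gdir (a k) i - b i = (a k i - b i) - alpha k *: gdir (a k) i.
    by rewrite addrAC.
  rewrite dot_subZ.
  have h4 : alpha k ^+ 2 * dot (gdir (a k) i) (gdir (a k) i) <= alpha k ^+ 2 * 4.
    by rewrite ler_pM2l ?exprn_gt0 // (gdir_sq (ne1 i) (ne2 i)).
  lra.
rewrite /Sq; apply: le_trans (ler_sum _ (fun i _ => H i)) _.
rewrite !big_split /= sumrN -mulr_sumr sumr_const card_ord.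
have := subgrad b ne1; have := alpha_pos k.
rewrite -mulr_natl; nra.
Qed.

End iter.
Lemma incr_ge (f : nat -> nat) : increasing_seq f -> forall l, (l <= f l)%N.
Proof.
move=> fi; elim=> // l IH.
have h : (f l.+1 <= f l)%N = false by have := fi l.+1 l; rewrite ltnn => <-.
move: h; lia.
Qed.

Lemma incr_comp (f g : nat -> nat) : increasing_seq f -> increasing_seq g -> increasing_seq (f \o g).
Proof. by move=> fi gi x y /=; rewrite [LHS]fi; exact: gi. Qed.

Lemma cvg_subseq (R : realType) (u : nat -> R) l (f : nat -> nat) :
  (forall k, (k <= f k)%N) -> u @ \oo --> (l : R) -> (u \o f) @ \oo --> l.
Proof.
move=> fk /cvgrPdist_le H; apply/cvgrPdist_le => e e0.
have [N _ HN] := H e e0; exists N => // k /= Nk; apply: HN => /=.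
exact: leq_trans Nk (fk k).
Qed.

Lemma BW_list (R : realType) (T : eqType) (c : nat -> T -> R) (s : seq T) :
  (forall p, exists M, forall l, `|c l p| <= M) ->
  exists f : nat -> nat, increasing_seq f /\ forall p, p \in s -> cvgn (fun l => c (f l) p).
Proof.
move=> bnd; elim: s => [|p s [f [fi Hf]]].
  by exists id; split => // x y.
have [M HM] := bnd p.
have bf : bounded_fun (fun l => c (f l) p).
  rewrite /=; apply/ex_bound; last by exists M => l _; exact: HM.
  exact: (@globally_properfilter _ _ 0%N).
have [g gi gc] := bolzano_weierstrass bf.
exists (f \o g); split; first exact: incr_comp.
move=> q; rewrite inE => /orP [/eqP ->|qs]; first exact: gc.
have := Hf q qs => /cvg_ex [L HL].
apply/cvg_ex; exists L.
exact: (@cvg_subseq R (fun l => c (f l) q) L g (incr_ge gi) HL).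
Qed.

Section tlim.
Context (R : realType) (n m : nat).
Implicit Types x y : 'I_m -> 'rV[R]_n.

Lemma mxnorm_le (v : 'rV[R]_n) : `|v| <= enorm v.
Proof.
have -> : `|v| = mx_norm v by [].
rewrite mx_normrE; apply/bigmax_leP; split; first exact: enorm_ge0.
by move=> [i j] _ /=; rewrite (ord1 i); exact: coord_le.
Qed.

Lemma Sq_ge0 x y : 0 <= Sq x y.
Proof. by apply: sumr_ge0 => i _; exact: dot_ge0. Qed.

Lemma dot_le_Sq x y i : dot (x i - y i) (x i - y i) <= Sq x y.
Proof.
rewrite /Sq (bigD1 i) //= lerDl; apply: sumr_ge0 => k _; exact: dot_ge0.
Qed.

Lemma enorm_le_Sq x y i : enorm (x i - y i) <= Num.sqrt (Sq x y).
Proof. by rewrite enormE ler_sqrt ?Sq_ge0 // dot_le_Sq. Qed.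

Lemma enorm_rev (u v : 'rV[R]_n) : `|enorm u - enorm v| <= enorm (u - v).
Proof.
rewrite ler_norml; apply/andP; split.
  have := enorm_triangle (v - u) u; rewrite subrK enormB; lra.
have := enorm_triangle (u - v) v; rewrite subrK; lra.
Qed.

Lemma Dlip x y : `|Dobj x - Dobj y| <= 2 * m%:R * Num.sqrt (Sq x y).
Proof.
rewrite /Dobj -sumrB; apply: le_trans (ler_norm_sum _ _ _) _.
have -> : 2 * m%:R * Num.sqrt (Sq x y) = \sum_(i < m) (2 * Num.sqrt (Sq x y)).
  by rewrite sumr_const card_ord -mulr_natr; ring.
apply: ler_sum => i _; apply: le_trans (enorm_rev _ _) _.
have -> : x i - x (ordS i) - (y i - y (ordS i)) = (x i - y i) - (x (ordS i) - y (ordS i)).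
  by rewrite !opprD !opprK addrACA.
apply: le_trans (enorm_triangle _ _) _; rewrite enormN.
have := enorm_le_Sq x y i; have := enorm_le_Sq x y (ordS i); lra.
Qed.

Lemma Sq_cvg_mx (c : nat -> 'I_m -> 'rV[R]_n) y :
  (fun l => Sq (c l) y) @ \oo --> 0 -> forall i, c l i @[l --> \oo] --> y i.
Proof.
move=> /cvgrPdist_le H i; apply/cvgrPdist_le => e e0.
have [N _ HN] := H (e ^+ 2) (exprn_gt0 _ e0).
exists N => // l /= Nl; have := HN l Nl; rewrite /= sub0r normrN ger0_norm ?Sq_ge0 // => hS.
apply: le_trans (mxnorm_le _) _; rewrite enormB.
apply: le_trans (enorm_le_Sq (c l) y i) _.
have -> : e = Num.sqrt (e ^+ 2) by rewrite sqrtr_sqr ger0_norm // ltW.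
by rewrite ler_sqrt // exprn_ge0 // ltW.
Qed.

Lemma Sq_cvg_D (c : nat -> 'I_m -> 'rV[R]_n) y :
  (fun l => Sq (c l) y) @ \oo --> 0 -> (fun l => Dobj (c l)) @ \oo --> Dobj y.
Proof.
move=> /cvgrPdist_le H; apply/cvgrPdist_le => e e0.
have e1 : 0 < e / (2 * m%:R + 1) by rewrite divr_gt0 //; lra.
have [N _ HN] := H _ (exprn_gt0 2 e1).
exists N => // l /= Nl; have := HN l Nl; rewrite /= sub0r normrN ger0_norm ?Sq_ge0 // => hS.
rewrite distrC; apply: le_trans (Dlip _ _) _.
have hs : Num.sqrt (Sq (c l) y) <= e / (2 * m%:R + 1).
  have -> : e / (2 * m%:R + 1) = Num.sqrt ((e / (2 * m%:R + 1)) ^+ 2).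
    by rewrite sqrtr_sqr ger0_norm // ltW.
  by rewrite ler_sqrt // exprn_ge0 // ltW.
have m0 : 0 <= 2 * m%:R :> R by rewrite mulr_ge0.
apply: le_trans (ler_wpM2l m0 hs) _.
rewrite mulrA ler_pdivrMr; last by lra.
nra.
Qed.

Lemma coord_cvg_Sq (c : nat -> 'I_m -> 'rV[R]_n) y :
  (forall i j, (fun l => c l i ord0 j) @ \oo --> y i ord0 j) ->
  (fun l => Sq (c l) y) @ \oo --> 0.
Proof.
move=> H; apply/cvgrPdist_le => e e0.
set d := Num.min 1 (e / ((m * n)%:R + 1)).
have d0 : 0 < d by rewrite lt_min ltr01 divr_gt0 //; lra.
have : \forall l \near \oo, forall p : 'I_m * 'I_n, `|y p.1 ord0 p.2 - c l p.1 ord0 p.2| <= d.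
  apply: filter_forall => p; exact: (cvgrPdist_le _ _).1 (H p.1 p.2) d d0.
case => N _ HN; exists N => // l /= Nl; have := HN l Nl => hl.
rewrite sub0r normrN ger0_norm ?Sq_ge0 //.
have hb : forall i j, (c l i - y i) ord0 j * (c l i - y i) ord0 j <= d.
  move=> i j; have := hl (i, j); rewrite /= !mxE distrC => hij.
  rewrite -expr2 -real_normK ?num_real //.
  have d1 : d <= 1 by rewrite ge_min lexx.
  have := normr_ge0 (c l i ord0 j - y i ord0 j); nra.
apply: le_trans (_ : \sum_(i < m) \sum_(j < n) d <= _).
  by apply: ler_sum => i _; apply: ler_sum => j _; exact: hb.
rewrite !sumr_const !card_ord -mulrnA -mulr_natr mulnC.
have dle : d <= e / ((m * n)%:R + 1) by rewrite ge_min lexx orbT.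
have k0 : 0 <= (m * n)%:R :> R by [].
apply: le_trans (ler_wpM2r k0 dle) _.
rewrite mulrAC ler_pdivrMr; last by lra.
nra.
Qed.
End tlim.

Lemma tBW (R : realType) (n m : nat) (c : nat -> 'I_m -> 'rV[R]_n) :
  (forall i j, exists M, forall l, `|c l i ord0 j| <= M) ->
  exists f : nat -> nat, exists y, increasing_seq f /\ (fun l => Sq (c (f l)) y) @ \oo --> 0.
Proof.
move=> bnd.
have [f [fi Hf]] := @BW_list R _ (fun l (p : 'I_m * 'I_n) => c l p.1 ord0 p.2) (enum {: 'I_m * 'I_n})
  (fun p => bnd p.1 p.2).
exists f, (fun i => \row_j limn (fun l => c (f l) i ord0 j)); split => //.
apply: coord_cvg_Sq => i j; rewrite mxE.
exact: (Hf (i, j) (mem_enum _ _)).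
Qed.

Lemma lim_le_eps (R : realType) (u : nat -> R) (L v : R) :
  u @ \oo --> L -> (forall e, 0 < e -> \forall l \near \oo, u l <= v + e) -> L <= v.
Proof.
move=> /cvgrPdist_le H Hv; rewrite leNgt; apply/negP => vL.
have e0 : 0 < (L - v) / 3 by rewrite divr_gt0 //; lra.
have [N1 _ H1] := H _ e0; have [N2 _ H2] := Hv _ e0.
have h1 := H1 (maxn N1 N2) (leq_maxl _ _); have h2 := H2 (maxn N1 N2) (leq_maxr _ _).
move: h1 h2; rewrite /= ler_norml; lra.
Qed.

Lemma ser_sum (R : realType) (u : nat -> R) j N : (j <= N)%N ->
  \sum_(j <= k < N) u k = series u N - series u j.
Proof. by move=> jN; rewrite /series /= (@big_cat_nat _ _ _ j 0 N _ _ (leq0n j) jN) /=; lra. Qed.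

Lemma Dterm (R : realType) n m (x : 'I_m -> 'rV[R]_n) i : enorm (x i - x (ordS i)) <= Dobj x.
Proof.
rewrite /Dobj (bigD1 i) //= lerDl; apply: sumr_ge0 => k _; exact: enorm_ge0.
Qed.

Lemma dist_le (R : realType) n (K : set 'rV[R]_n) x y : K y -> dist_set K x <= enorm (x - y).
Proof.
move=> Ky; apply: ge_inf; last by exists y.
by exists 0 => _ [z _ <-]; exact: enorm_ge0.
Qed.

Section main.
Context (R : realType) (n m : nat) (C : 'I_m -> set 'rV[R]_n) (alpha : nat -> R)
  (a : nat -> 'I_m -> 'rV[R]_n).
Hypothesis m2 : (2 <= m)%N.
Hypothesis Cne : forall i, C i !=set0.
Hypothesis Ccl : forall i, closed (C i).
Hypothesis Ccvx : forall i, convex_set (C i).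
Hypothesis Cdisj : forall i j, i != j -> C i `&` C j = set0.
Hypothesis coerc : (forall i, ebounded (C i)) \/
   (forall j, ~ ebounded (C j) ->
      forall s : nat -> 'rV[R]_n, (forall k, C j (s k)) ->
        (fun k => enorm (s k)) @ \oo --> +oo ->
        (fun k => dist_set (C (ord_pred j)) (s k)) @ \oo --> +oo \/
        (fun k => dist_set (C (ordS j)) (s k)) @ \oo --> +oo).
Hypothesis alpha_pos : forall k, 0 < alpha k.
Hypothesis ser_inf : series alpha @ \oo --> +oo.
Hypothesis ser2 : cvg (series (fun k => alpha k ^+ 2) @ \oo).
Hypothesis a0 : forall i, C i (a 0%N i).
Hypothesis aproj : forall k i, is_proj (C i) (a k i - alpha k *: gdir (a k) i) (a k.+1 i).

Lemma tele b : (forall i, C i (b i)) -> forall j d,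
  Sq (a (j + d)) b + 2 * \sum_(j <= k < j + d) (alpha k * (Dobj (a k) - Dobj b))
  <= Sq (a j) b + 4 * m%:R * \sum_(j <= k < j + d) alpha k ^+ 2.
Proof.
move=> Cb j; elim=> [|d IH].
  by rewrite addn0 !big_geq //; lra.
rewrite addnS !big_nat_recr /= ?leq_addr //.
have := step m2 Cdisj Ccvx alpha_pos a0 aproj (j + d) Cb.
move: IH; set S1 := \sum_(j <= k < j + d) _; set S2 := \sum_(j <= k < j + d) _.
set A := alpha (j + d); set D1 := Dobj (a (j + d)); set mm := m%:R.
move=> h1 h2; rewrite -subr_ge0.
match goal with |- is_true (0 <= ?X) => have -> : X =
  ((Sq (a j) b + 4 * mm * S2) - (Sq (a (j + d)) b + 2 * S1)) +
  ((Sq (a (j + d)) b - 2 * A * (D1 - Dobj b) + 4 * mm * A ^+ 2) - Sq (a (j + d).+1) b) by ring end.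
by rewrite addr_ge0 // subr_ge0.
Qed.

Let L2 := limn (series (fun k => alpha k ^+ 2)).

Lemma ser2_le N : series (fun k => alpha k ^+ 2) N <= L2.
Proof.
apply: nondecreasing_cvgn_le => //.
by apply: nondecreasing_series => k _ _; exact: sqr_ge0.
Qed.

Lemma tail2 j N : (j <= N)%N ->
  \sum_(j <= k < N) alpha k ^+ 2 <= L2 - series (fun k => alpha k ^+ 2) j.
Proof. by move=> jN; rewrite ser_sum //; have := ser2_le N; lra. Qed.

Lemma tail2_small e : 0 < e -> exists j0, forall j, (j0 <= j)%N ->
  L2 - series (fun k => alpha k ^+ 2) j <= e.
Proof.
move=> e0; have := ser2 => /cvgrPdist_le /(_ e e0) [N _ HN].
exists N => j Nj; have := HN j Nj; rewrite /= ler_norml /L2; lra.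
Qed.

Lemma L2_ge0 : 0 <= L2.
Proof. by apply: le_trans (ser2_le 0); rewrite /series /= big_geq. Qed.


Lemma coerc_bound (cs : nat -> 'I_m -> 'rV[R]_n) B :
  (forall l i, C i (cs l i)) -> (forall l, Dobj (cs l) <= B) ->
  forall i, exists M, forall l, enorm (cs l i) <= M.
Proof.
move=> Ccs DB i.
case: coerc => [bd|co].
  by have [M HM] := bd i; exists M => l; apply: HM.
apply: contrapT => nM.
have nb : ~ ebounded (C i).
  by move=> [M HM]; apply: nM; exists M => l; apply: HM.
have hN : forall N : nat, exists l, N%:R < enorm (cs l i).
  move=> N; apply: contrapT => h; apply: nM; exists N%:R => l.
  by rewrite leNgt; apply/negP => hl; apply: h; exists l.
have [psi Hpsi] := choice hN.
pose s := fun N => cs (psi N) i.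
have Cs : forall k, C i (s k) by move=> k; exact: Ccs.
have sinf : (fun k => enorm (s k)) @ \oo --> +oo.
  apply/cvgryPge => A; exists (Num.Def.archi_bound `|A|) => // N /= hAN.
  have h1 := archi_boundP (normr_ge0 A).
  have h2 : (Num.Def.archi_bound `|A|)%:R <= N%:R :> R by rewrite ler_nat.
  have h3 := Hpsi N; have h4 := ler_norm A.
  rewrite /s; lra.
have dS : forall k, dist_set (C (ordS i)) (s k) <= B.
  move=> k; apply: le_trans (dist_le _ (Ccs (psi k) (ordS i))) _.
  exact: le_trans (Dterm _ _) (DB _).
have dP : forall k, dist_set (C (ord_pred i)) (s k) <= B.
  move=> k; apply: le_trans (dist_le _ (Ccs (psi k) (ord_pred i))) _.
  rewrite enormB; apply: le_trans (DB (psi k)); rewrite /s.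
  by have := Dterm (cs (psi k)) (ord_pred i); rewrite ord_predK.
case: (co i nb s Cs sinf) => /cvgryPge /(_ (B + 1)) [K _ HK].
  by have := HK K (leqnn K); have := dP K; lra.
by have := HK K (leqnn K); have := dS K; lra.
Qed.


Lemma inv_small (e : R) : 0 < e -> exists K : nat, forall l, (K <= l)%N -> (l.+1%:R)^-1 <= e.
Proof.
move=> e0; exists (Num.Def.archi_bound (e^-1)) => l hl.
have ei : 0 < e^-1 by rewrite invr_gt0.
have h1 := archi_boundP (ltW ei).
have h2 : (Num.Def.archi_bound e^-1)%:R <= l.+1%:R :> R by rewrite ler_nat; lia.
rewrite -(invrK e) lef_pV2 ?posrE ?invr_gt0 //; lra.
Qed.

Lemma minimizer : exists bs : 'I_m -> 'rV[R]_n, (forall i, C i (bs i)) /\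
  forall c, (forall i, C i (c i)) -> Dobj bs <= Dobj c.
Proof.
pose P := [set Dobj c | c in [set c : 'I_m -> 'rV[R]_n | forall i, C i (c i)]].
have [b0 Cb0] := choice Cne.
have Pne : P !=set0 by exists (Dobj b0), b0.
have Plb : has_lbound P.
  by exists 0 => _ [c _ <-]; rewrite /Dobj sumr_ge0 // => i _; exact: enorm_ge0.
have hinf : has_inf P by split.
pose Ds := inf P.
have hk : forall k : nat, exists c, (forall i, C i (c i)) /\ Dobj c < Ds + (k.+1%:R)^-1.
  move=> k; have kp : 0 < (k.+1%:R)^-1 :> R by rewrite invr_gt0 ltr0Sn.
  have [_ [c Cc <-] h] := inf_adherent kp hinf.
  by exists c.
have [bs Hbs] := choice hk.
have il1 : forall l : nat, (l.+1%:R)^-1 <= 1 :> R.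
  by move=> l; rewrite invf_le1 ?ltr0Sn // ler1n.
have bnd := @coerc_bound bs (Ds + 1) (fun l i => (Hbs l).1 i)
  (fun l => ltW (lt_le_trans (Hbs l).2 (lerD (lexx _) (il1 l)))).
have cb : forall i j, exists M, forall l, `|bs l i ord0 j| <= M.
  move=> i j; have [M HM] := bnd i; exists M => l.
  exact: le_trans (coord_le _ _) (HM l).
have [f [y [fi Hy]]] := tBW cb.
have Cy : forall i, C i (y i).
  move=> i; have hc := Sq_cvg_mx Hy (i:=i).
  apply: (closed_cvg (C i) (@Ccl i) _ (y i) hc).
  by exists 0%N => // l _; exact: (Hbs _).1.
have Dy : Dobj y <= Ds.
  apply: (lim_le_eps (Sq_cvg_D Hy)) => e e0.
  have [K HK] := inv_small e0.
  exists K => // l /= Kl.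
  have := (Hbs (f l)).2; have := HK l Kl.
  have : (f l).+1%:R^-1 <= l.+1%:R^-1 :> R.
    by rewrite lef_pV2 ?posrE ?ltr0Sn // ler_nat ltnS incr_ge.
  move: ((f l).+1%:R^-1) (l.+1%:R^-1) => u v; lra.
exists y; split => // c Cc; apply: le_trans Dy _.
by apply: ge_inf => //; exists c.
Qed.


Lemma Sq_tele_opt b : (forall i, C i (b i)) ->
  (forall c, (forall i, C i (c i)) -> Dobj b <= Dobj c) ->
  forall j N, (j <= N)%N ->
  Sq (a N) b <= Sq (a j) b + 4 * m%:R * (L2 - series (fun k => alpha k ^+ 2) j).
Proof.
move=> Cb bopt j N jN; rewrite -(subnKC jN).
have := tele Cb j (N - j).
have h1 : 0 <= \sum_(j <= k < j + (N - j)) alpha k * (Dobj (a k) - Dobj b).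
  apply: sumr_ge0 => k _; apply: mulr_ge0; first exact: ltW.
  rewrite subr_ge0.
  by apply: bopt => i; exact: (aC a0 aproj).
have h2 := tail2 (leq_addr (N - j) j).
have m0 : 0 <= 4 * m%:R :> R by rewrite mulr_ge0.
have h3 := ler_wpM2l m0 h2.
lra.
Qed.

Lemma freq b : (forall i, C i (b i)) ->
  (forall c, (forall i, C i (c i)) -> Dobj b <= Dobj c) ->
  forall e j, 0 < e -> exists k, (j <= k)%N /\ Dobj (a k) <= Dobj b + e.
Proof.
move=> Cb bopt e j e0; apply: contrapT => hn.
have hk : forall k, (j <= k)%N -> Dobj b + e < Dobj (a k).
  move=> k jk; rewrite ltNge; apply/negP => h; apply: hn; by exists k.
set Q := Sq (a j) b + 4 * m%:R * (L2 - series (fun k => alpha k ^+ 2) j).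
have := ser_inf => /cvgryPge /(_ (series alpha j + (Q + 1) / (2 * e))) [K _ HK].
set N := maxn K j.
have hN := HK N (leq_maxl _ _).
have jN : (j <= N)%N by exact: leq_maxr.
have := tele Cb j (N - j); rewrite (subnKC jN).
have h1 : e * (series alpha N - series alpha j) <=
    \sum_(j <= k < N) alpha k * (Dobj (a k) - Dobj b).
  rewrite -ser_sum // mulr_sumr; apply: ler_sum_nat => k /andP [jk _].
  rewrite mulrC ler_pM2l //; have := hk k jk; lra.
have h2 := tail2 jN.
have m0 : 0 <= 4 * m%:R :> R by rewrite mulr_ge0.
have h3 := ler_wpM2l m0 h2.
have h4 : 0 <= Sq (a N) b by exact: Sq_ge0.
have h5 : (Q + 1) / (2 * e) * (2 * e) = Q + 1 by rewrite divfK // mulf_neq0 // gt_eqF.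
move: hN h1 h2 h3 h4 h5; rewrite /Q.
move: (series alpha N) (series alpha j) ((_ + 1) / (2 * e)) => sN sj z.
nra.
Qed.


Lemma main_sec : exists astar : 'I_m -> 'rV[R]_n,
    [/\ (forall i, C i (astar i)),
        (forall b : 'I_m -> 'rV[R]_n, (forall i, C i (b i)) ->
           Dobj astar <= Dobj b),
        (forall i, a k i @[k --> \oo] --> astar i) &
        (fun k => Dobj (a k)) @ \oo --> Dobj astar].
Proof.
have [bs [Cbs bopt]] := minimizer.
have aC' := aC a0 aproj.
have hphi : forall j, exists k, (j <= k)%N /\ Dobj (a k) <= Dobj bs + (j.+1%:R)^-1.
  move=> j; apply: freq => //; by rewrite invr_gt0 ltr0Sn.
have [phi Hphi] := choice hphi.
set Sbd := Sq (a 0%N) bs + 4 * m%:R * L2.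
have Sb : forall N, Sq (a N) bs <= Sbd.
  move=> N; have := Sq_tele_opt Cbs bopt (leq0n N).
  by rewrite /Sbd /series /= big_geq // subr0.
have cb : forall i j, exists M, forall l, `|a (phi l) i ord0 j| <= M.
  move=> i j; exists (`|bs i ord0 j| + Num.sqrt Sbd) => l.
  have h1 := coord_le (a (phi l) i - bs i) j.
  have h2 := enorm_le_Sq (a (phi l)) bs i.
  have h3 : Num.sqrt (Sq (a (phi l)) bs) <= Num.sqrt Sbd.
    by rewrite ler_sqrt ?Sb // (le_trans (Sq_ge0 _ _) (Sb 0%N)).
  have h4 := ler_normD (a (phi l) i ord0 j - bs i ord0 j) (bs i ord0 j).
  move: h1 h4; rewrite !mxE subrK; lra.
have [f [y [fi Hy]]] := tBW cb.
have Cy : forall i, C i (y i).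
  move=> i; have hc := Sq_cvg_mx Hy (i:=i).
  apply: (closed_cvg (C i) (@Ccl i) _ (y i) hc).
  by exists 0%N => // l _; exact: aC'.
have Dy : Dobj y <= Dobj bs.
  apply: (lim_le_eps (Sq_cvg_D Hy)) => e e0.
  have [K HK] := inv_small e0.
  exists K => // l /= Kl.
  have := (Hphi (f l)).2; have := HK l Kl.
  have : (f l).+1%:R^-1 <= l.+1%:R^-1 :> R.
    by rewrite lef_pV2 ?posrE ?ltr0Sn // ler_nat ltnS incr_ge.
  move: ((f l).+1%:R^-1) (l.+1%:R^-1) => u v; lra.
have yopt : forall c, (forall i, C i (c i)) -> Dobj y <= Dobj c.
  by move=> c Cc; apply: le_trans Dy (bopt c Cc).
have S0 : (fun N => Sq (a N) y) @ \oo --> 0.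
  apply/cvgrPdist_le => e e0.
  have e1 : 0 < e / (8 * m%:R + 1) by rewrite divr_gt0 // ltr_wpDl // mulr_ge0.
  have [j0 Hj0] := tail2_small e1.
  have e2 : 0 < e / 2 by rewrite divr_gt0.
  have [N1 _ HN1] := (cvgrPdist_le _ _).1 Hy _ e2.
  pose l := maxn j0 N1.
  have hl1 := HN1 l (leq_maxr _ _).
  have kl : (l <= phi (f l))%N := leq_trans (incr_ge fi l) (Hphi (f l)).1.
  exists (phi (f l)) => // N /= hN.
  rewrite sub0r normrN ger0_norm ?Sq_ge0 //.
  have h1 := Sq_tele_opt Cy yopt hN.
  have h2 := Hj0 (phi (f l)) (leq_trans (leq_maxl _ _) kl).
  move: hl1; rewrite /= sub0r normrN ger0_norm ?Sq_ge0 // => hl1.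
  have m0 : 0 <= 4 * m%:R :> R by rewrite mulr_ge0.
  have h3 := ler_wpM2l m0 h2.
  have h5 : 4 * m%:R * (e / (8 * m%:R + 1)) <= e / 2.
    rewrite mulrA ler_pdivrMr; last by rewrite ltr_wpDl // mulr_ge0.
    have mm : 0 <= m%:R :> R by [].
    nra.
  lra.
exists y; split => //.
  by move=> i; exact: (Sq_cvg_mx S0 (i:=i)).
exact: Sq_cvg_D S0.
Qed.

End main.

Local Close Scope convex_scope.

Theorem mainTheorem6 (R : realType) (n m : nat) (C : 'I_m -> set 'rV[R]_n)
  (alpha : nat -> R) (a : nat -> 'I_m -> 'rV[R]_n) :
  (2 <= m)%N ->
  (forall i, C i !=set0) ->
  (forall i, closed (C i)) ->
  (forall i, convex_set (C i)) ->
  (forall i j, i != j -> C i `&` C j = set0) ->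
  ((forall i, ebounded (C i)) \/
   (forall j, ~ ebounded (C j) ->
      forall s : nat -> 'rV[R]_n, (forall k, C j (s k)) ->
        (fun k => enorm (s k)) @ \oo --> +oo ->
        (fun k => dist_set (C (ord_pred j)) (s k)) @ \oo --> +oo \/
        (fun k => dist_set (C (ordS j)) (s k)) @ \oo --> +oo)) ->
  (forall k, 0 < alpha k) ->
  series alpha @ \oo --> +oo ->
  cvg (series (fun k => alpha k ^+ 2) @ \oo) ->
  (forall i, C i (a 0%N i)) ->
  (forall k i, is_proj (C i) (a k i - alpha k *: gdir (a k) i) (a k.+1 i)) ->
  exists astar : 'I_m -> 'rV[R]_n,
    [/\ (forall i, C i (astar i)),
        (forall b : 'I_m -> 'rV[R]_n, (forall i, C i (b i)) ->
           Dobj astar <= Dobj b),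
        (forall i, a k i @[k --> \oo] --> astar i) &
        (fun k => Dobj (a k)) @ \oo --> Dobj astar].
Proof.
move=> m2 Cne Ccl Ccvx Cdisj coerc ap si s2 a0 aproj.
exact: (main_sec m2 Cne Ccl Ccvx Cdisj coerc ap si s2 a0 aproj).
Qed.
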